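(* For all fixed $x,y\ge 1$, the expected number of edges in the random task-dependency graph resulting from the $(x,y)$ edge-removal process on $n$ vertices is $\Theta(n)$ as $n\to\infty$.
   Context: A task-dependency graph is a finite directed acyclic graph (no loops, no multiple edges). A vertex is initial if it has in-degree $0$ and terminal if it has out-degree $0$ (an isolated vertex is both). The $(x,y)$ edge-removal process on $n$ vertices: start with the task-dependency graph on $\{1,\dots,n\}$ having all edges $(a,b)$ with $a<b$. Edges are removed uniformly at random, one at a time; a removal that would cause more than $x$ initial vertices or more than $y$ terminal vertices is cancelled. The process terminates when no further edge can be removed. *)

(* Defs.v *)
From HB Require Import structures.
From mathcomp Require Import all_boot all_order all_algebra all_fingroup.
Set Implicit Arguments. Unset Strict Implicit. Unset Printing Implicit Defensive.
Import Order.TTheory GRing.Theory Num.Theory.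

Notation Edge n := {e : 'I_n * 'I_n | (e.1 < e.2)%N}.

Definition is_initial n (G : {set Edge n}) (v : 'I_n) : bool :=
  [forall e in G, (val e).2 != v].
Definition is_terminal n (G : {set Edge n}) (v : 'I_n) : bool :=
  [forall e in G, (val e).1 != v].
Definition num_initial n (G : {set Edge n}) : nat := #|[set v | is_initial G v]|.
Definition num_terminal n (G : {set Edge n}) : nat := #|[set v | is_terminal G v]|.

Definition try_remove (x y : nat) n (G : {set Edge n}) (e : Edge n) : {set Edge n} :=
  if [&& e \in G, (num_initial (G :\ e) <= x)%N & (num_terminal (G :\ e) <= y)%N]
  then G :\ e else G.

(* The process driven by the uniformly random ordering of the edges given by
   the permutation s: edges are attempted in the order s e_1, s e_2, ... *)
Definition final_graph (x y : nat) n (s : {perm Edge n}) : {set Edge n} :=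
  foldl (@try_remove x y n) [set: Edge n] [seq s e | e : Edge n].

Definition expected_edges (x y n : nat) : rat :=
  ((\sum_(s : {perm Edge n}) (#|final_graph x y s|)%:R) / (#|{perm Edge n}|)%:R)%R.

(* Main.v *)
Require Import Defs.
From HB Require Import structures.
From mathcomp Require Import all_boot all_order all_algebra all_fingroup.
From mathcomp Require Import zify.
Import Order.TTheory GRing.Theory Num.Theory.

Section Aux.
Variables (x y n : nat).

Definition Puniq (G : {set Edge n}) (a : Edge n) : bool :=
  [forall e in G, ((val e).2 == (val a).2) ==> (e == a)] ||
  [forall e in G, ((val e).1 == (val a).1) ==> (e == a)].

Lemma try_remove_sub (G : {set Edge n}) (a : Edge n) : try_remove x y G a \subset G.
Proof. rewrite /try_remove; case: ifP => _; [exact: subD1set | exact: subxx]. Qed.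

Lemma inv_try (G : {set Edge n}) (a : Edge n) : num_initial G <= x -> num_terminal G <= y ->
  num_initial (try_remove x y G a) <= x /\ num_terminal (try_remove x y G a) <= y.
Proof. by rewrite /try_remove; case: ifP => [/and3P[_ h1 h2]|_]. Qed.

Lemma Puniq_sub (F G : {set Edge n}) (a : Edge n) : F \subset G -> a \in F -> Puniq G a -> Puniq F a.
Proof.
move=> sub aF; case/orP => /forall_inP H; apply/orP; [left|right];
  apply/forall_inP => e eF; apply: H; exact: (subsetP sub).
Qed.

Lemma key (G : {set Edge n}) (a : Edge n) : num_initial G <= x -> num_terminal G <= y -> a \in G ->
  ~~ ((num_initial (G :\ a) <= x) && (num_terminal (G :\ a) <= y)) -> Puniq G a.
Proof.
move=> hi ht aG hc; apply/negPn/negP; rewrite negb_or.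
case/andP=> /forall_inPn [e1 e1G h1] /forall_inPn [e2 e2G h2].
rewrite negb_imply in h1; rewrite negb_imply in h2.
case/andP: h1 => /eqP h1 n1; case/andP: h2 => /eqP h2 n2.
have Ei : num_initial (G :\ a) = num_initial G.
  rewrite /num_initial; apply: eq_card => v; rewrite !inE /is_initial.
  apply/idP/idP.
  - move=> /forall_inP H; apply/forall_inP => e eG.
    case: (eqVneq e a) => [->|ne]; last by apply: H; rewrite !inE ne eG.
    rewrite -h1; apply: H; by rewrite !inE n1 e1G.
  - move=> /forall_inP H; apply/forall_inP => e; rewrite !inE => /andP[_ eG].
    exact: H.
have Et : num_terminal (G :\ a) = num_terminal G.
  rewrite /num_terminal; apply: eq_card => v; rewrite !inE /is_terminal.
  apply/idP/idP.
  - move=> /forall_inP H; apply/forall_inP => e eG.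
    case: (eqVneq e a) => [->|ne]; last by apply: H; rewrite !inE ne eG.
    rewrite -h2; apply: H; by rewrite !inE n2 e2G.
  - move=> /forall_inP H; apply/forall_inP => e; rewrite !inE => /andP[_ eG].
    exact: H.
by rewrite Ei Et hi ht in hc.
Qed.

Lemma fold_inv (l : seq (Edge n)) (G : {set Edge n}) :
  num_initial G <= x -> num_terminal G <= y ->
  [/\ num_initial (foldl (@try_remove x y n) G l) <= x,
      num_terminal (foldl (@try_remove x y n) G l) <= y,
      foldl (@try_remove x y n) G l \subset G &
      forall e, e \in l -> e \in foldl (@try_remove x y n) G l ->
        Puniq (foldl (@try_remove x y n) G l) e].
Proof.
elim: l G => [|a l IH] G hi ht /=; first by split=> //; exact: subxx.
have [hi1 ht1] := inv_try G a hi ht.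
have [h1 h2 h3 h4] := IH _ hi1 ht1.
split=> //; first exact: subset_trans h3 (try_remove_sub G a).
move=> e; rewrite inE => /orP[/eqP->|el] eF; last exact: h4.
have aG1 := subsetP h3 _ eF.
apply: (Puniq_sub _ _ _ h3 eF).
move: aG1; rewrite /try_remove.
case E: [&& a \in G, _ & _]; first by rewrite !inE eqxx.
move=> aG; rewrite aG /= in E; apply: key => //; by rewrite E.
Qed.

Lemma init_setT : num_initial [set: Edge n] <= 1.
Proof.
apply/card_le1_eqP => u v; rewrite !inE => /forall_inP Hu /forall_inP Hv.
have z : forall w : 'I_n, w \in [pred w | is_initial [set: Edge n] w] -> val w = 0.
  move=> w; rewrite inE => /forall_inP H.
  case: (posnP (val w)) => // wp.
  have lt0 : 0 < n by apply: leq_ltn_trans (ltn_ord w).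
  have := H (exist _ (Ordinal lt0, w) wp) (in_setT _); by rewrite /= eqxx.
apply/val_inj; rewrite (z u) ?(z v) // inE; exact/forall_inP.
Qed.

Lemma term_setT : num_terminal [set: Edge n] <= 1.
Proof.
apply/card_le1_eqP => u v; rewrite !inE => /forall_inP Hu /forall_inP Hv.
have z : forall w : 'I_n, w \in [pred w | is_terminal [set: Edge n] w] -> val w = n.-1.
  move=> w; rewrite inE => /forall_inP H.
  have le := ltn_ord w.
  have lt0 : n.-1 < n by rewrite prednK // (leq_ltn_trans (leq0n w) le).
  case: (ltngtP (val w) n.-1) => // wp.
    have := H (exist _ (w, Ordinal lt0) wp) (in_setT _); by rewrite /= eqxx.
  move: wp le; case: n {Hu Hv H lt0 u v} w => [|k] w /=; first by case: w.
  by move=> a b; have := leq_ltn_trans a b; rewrite ltnn.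
apply/val_inj; rewrite (z u) ?(z v) // inE; exact/forall_inP.
Qed.

Lemma upper (F : {set Edge n}) : (forall e, e \in F -> Puniq F e) -> #|F| <= n + n.
Proof.
move=> HP.
pose A := [set e | [forall e' in F, ((val e').2 == (val e).2) ==> (e' == e)]].
rewrite -(cardsID A F); apply: leq_add.
- rewrite -(card_in_imset (f := fun e : Edge n => (val e).2)).
    by apply: leq_trans (max_card _) _; rewrite card_ord.
  move=> e e'; rewrite !inE => /andP[eF /forall_inP H] /andP[e'F _] eq.
  apply/eqP; rewrite eq_sym; apply: (implyP (H e' e'F)); by rewrite eq.
- rewrite -(card_in_imset (f := fun e : Edge n => (val e).1)).
    by apply: leq_trans (max_card _) _; rewrite card_ord.
  move=> e e'; rewrite !inE => /andP[eA eF] /andP[_ e'F] eq.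
  have := HP e eF; rewrite /Puniq; move: eA => /negbTE -> /=.
  move=> /forall_inP H.
  apply/eqP; rewrite eq_sym; apply: (implyP (H e' e'F)); by rewrite eq.
Qed.

Lemma lower (F : {set Edge n}) : num_initial F <= x -> n <= #|F| + x.
Proof.
move=> hi.
have : #|~: [set v | is_initial F v]| <= #|F|.
  apply: leq_trans (leq_imset_card (fun e : Edge n => (val e).2) F).
  apply: subset_leq_card; apply/subsetP => v; rewrite !inE.
  move=> /forall_inPn [e eF]; rewrite negbK => /eqP <-.
  exact: imset_f.
move=> hc.
have := cardsC [set v | is_initial F v]; rewrite card_ord => hs.
move: hi; rewrite /num_initial; lia.
Qed.

End Aux.

Lemma final_bounds x y n (s : {perm Edge n}) : 1 <= x -> 1 <= y ->
  n <= #|final_graph x y s| + x /\ #|final_graph x y s| <= n + n.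
Proof.
move=> hx hy.
have [h1 h2 h3 h4] := fold_inv x y n [seq s e | e : Edge n] [set: Edge n]
   (leq_trans (init_setT n) hx) (leq_trans (term_setT n) hy).
split; first exact: lower h1.
apply: upper => e eF; apply: h4 => //.
apply/mapP; exists (s^-1 e)%g; last by rewrite permKV.
by rewrite mem_enum.
Qed.

Local Open Scope ring_scope.

Theorem mainTheorem8 (x y : nat) (hx : (1 <= x)%N) (hy : (1 <= y)%N) :
  exists (c1 c2 : rat) (N : nat), 0 < c1 /\ 0 < c2 /\
    forall n : nat, (N <= n)%N ->
      c1 * n%:R <= expected_edges x y n /\ expected_edges x y n <= c2 * n%:R.
Proof.
exists (1/2), 2, (x + x)%N; split=> //; split=> // n hn.
have kpos : 0 < (#|{perm Edge n}|)%:R :> rat.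
  by rewrite ltr0n; apply/card_gt0P; exists 1%g.
rewrite /expected_edges; split.
- rewrite ler_pdivlMr //.
  apply: le_trans (_ : \sum_(s : {perm Edge n}) ((1/2) * n%:R) <= _).
    by rewrite sumr_const -[_ *+ #|_|]mulr_natr.
  apply: ler_sum => s _.
  have [h _] := final_bounds x y n s hx hy.
  rewrite -(@ler_pM2l _ 2) // mulrA divff // mul1r -natrM ler_nat.
  lia.
- rewrite ler_pdivrMr //.
  apply: (@le_trans _ _ (\sum_(s : {perm Edge n}) (2 * n%:R))).
    2: by rewrite sumr_const -[_ *+ #|_|]mulr_natr.
    apply: ler_sum => s _.
    have [_ h] := final_bounds x y n s hx hy.
    rewrite -natrM ler_nat; lia.
Qed.
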